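(* Consider any concurrent run of the Block-STM algorithm (described in the context) on a block of $n$ transactions. If at some time $T$ simultaneously $\mathit{execution\_idx}\ge n$, $\mathit{validation\_idx}\ge n$ and $\mathit{num\_active\_tasks}=0$, then all transactions $tx_0,\dots,tx_{n-1}$ are globally committed at time $T$.
   Context: Model: threads perform atomic operations that appear to take place in a single global order; a ''time'' is a point in this order. Locks protect per-transaction status and dependency sets. Problem. A block is a sequence of transactions $tx_0,\dots,tx_{n-1}$ ($n=\mathtt{BLOCK.size()}$), each a deterministic program reading and writing memory locations. Shared state. MVMemory: a map $\mathit{data}$ from pairs $(\text{location}, \text{txn index})$ to either (incarnation number, value) or a marker ESTIMATE; arrays $\mathit{last\_written\_locations}[j]$ and $\mathit{last\_read\_set}[j]$, each loaded/stored atomically. A version is $(j,i)$ (transaction index, incarnation number). Scheduler: atomic counters $\mathit{execution\_idx}=0$, $\mathit{validation\_idx}=0$, $\mathit{decrease\_cnt}=0$, $\mathit{num\_active\_tasks}=0$, flag $\mathit{done\_marker}=$false; per transaction $j$ a lock-protected $\mathit{txn\_status}[j]=(\text{incarnation},\text{status})$, initially $(0,\mathtt{READY\_TO\_EXECUTE})$, status $\in\{\mathtt{READY\_TO\_EXECUTE},\mathtt{EXECUTING},\mathtt{EXECUTED},\mathtt{ABORTING}\}$, and a lock-protected dependency set $\mathit{txn\_dependency}[j]$, initially empty. MVMemory operations. $\mathtt{read}(p,j)$: among entries $(p,k)$ with $k<j$ take the largest $k$; if none, return NOT_FOUND; if ESTIMATE return READ_ERROR with blocking index $k$; else OK with version and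 value. $\mathtt{record}((j,i),R,W)$: write $\mathit{data}[(p,j)]:=(i,v)$ for $(p,v)\in W$; remove entries $(p,j)$ for previously written locations not rewritten; update $\mathit{last\_written\_locations}[j]$; store $\mathit{last\_read\_set}[j]:=R$; return whether a location not previously written was written. $\mathtt{convert\_writes\_to\_estimates}(j)$ replaces all entries $(p,j)$, $p\in\mathit{last\_written\_locations}[j]$, by ESTIMATE. $\mathtt{validate\_read\_set}(j)$ re-reads each recorded location with $\mathtt{read}(p,j)$ and returns true iff each yields the same recorded version (NOT_FOUND for recorded $\bot$) and no READ_ERROR. VM.execute($j$) runs $tx_j$ locally, reading its own writes, otherwise calling $\mathtt{read}(p,j)$ (NOT_FOUND: read initial storage, record $(p,\bot)$; OK: record version; READ_ERROR: stop and return blocking index); returns read-set and write-set; it never writes shared memory. Scheduler. $\mathtt{decrease\_execution\_idx}(t)$/$\mathtt{decrease\_validation\_idx}(t)$ set the index to $\min(\text{index},t)$ then increment $\mathit{decrease\_cnt}$. $\mathtt{try\_incarnate}(k)$: if $k<n$ and status of $tx_k$ is $\mathtt{READY\_TO\_EXECUTE}$ with incarnation $i$, set $\mathtt{EXECUTING}$ and return $(k,i)$; else decrement $\mathit{num\_active\_tasks}$, return none. $\mathtt{next\_task}$: if $\mathit{validation\_idx}<\mathit{execution\_idx}$: if $\mathit{validation\_idx}\ge n$ call check_done, return none; else increment $\mathit{num\_active\_tasks}$, fetch-and-increment $\mathit{validation\_idx}$ getting $k$; if $k<n$ and $tx_k$'s status is $\mathtt{EXECUTED}$ with incarnation $i$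 return validation task $(k,i)$, else decrement $\mathit{num\_active\_tasks}$, return none. Otherwise: if $\mathit{execution\_idx}\ge n$ call check_done, return none; else increment $\mathit{num\_active\_tasks}$, fetch-and-increment $\mathit{execution\_idx}$ getting $k$, return $\mathtt{try\_incarnate}(k)$. $\mathtt{check\_done}$: read $c:=\mathit{decrease\_cnt}$; if $\min(\mathit{execution\_idx},\mathit{validation\_idx})\ge n$, $\mathit{num\_active\_tasks}=0$ and $\mathit{decrease\_cnt}=c$, set $\mathit{done\_marker}:=$true. Execution task $(k,i)$: run VM.execute($k$). On READ_ERROR with blocking $b$: under lock of $\mathit{txn\_dependency}[b]$, if status of $tx_b$ is $\mathtt{EXECUTED}$, retry the execution immediately; else set $tx_k$'s status to $\mathtt{ABORTING}$, add $k$ to $\mathit{txn\_dependency}[b]$, release, decrement $\mathit{num\_active\_tasks}$. Otherwise $w:=\mathtt{record}(\dots)$; set status $\mathtt{EXECUTED}$; swap out $\mathit{txn\_dependency}[k]$; for each dependent $d$ set $\mathit{txn\_status}[d]:=(\text{incarnation}+1,\mathtt{READY\_TO\_EXECUTE})$, and if any, $\mathtt{decrease\_execution\_idx}$(min dependent); if $\mathit{validation\_idx}>k$: if $w$ then $\mathtt{decrease\_validation\_idx}(k)$ else return validation task $(k,i)$ to the caller without changing $\mathit{num\_active\_tasks}$; if no task returned, decrement $\mathit{num\_active\_tasks}$. Validation task $(k,i)$: if $\mathtt{validate\_read\_set}(k)$ is false and, under lock, $\mathit{txn\_status}[k]=(i,\mathtt{EXECUTED})$, set status $\mathtt{ABORTING}$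 (aborted). If aborted: convert writes of $k$ to ESTIMATE; set $\mathit{txn\_status}[k]:=(i+1,\mathtt{READY\_TO\_EXECUTE})$; $\mathtt{decrease\_validation\_idx}(k+1)$; if $\mathit{execution\_idx}>k$ and $\mathtt{try\_incarnate}(k)$ returns a version, return that execution task (without changing $\mathit{num\_active\_tasks}$). Otherwise decrement $\mathit{num\_active\_tasks}$. Each thread loops while $\mathit{done\_marker}$ is false, performing tasks in hand or obtained via next_task; it joins on exit. Intervals. Pre-validation of $tx_j$: from a fetch-and-increment of $\mathit{validation\_idx}$ returning $j$ until just before the corresponding decrement in next_task or just before the resulting validation task is returned. Execution of $(j,i)$: from setting $tx_j$'s status to $\mathtt{EXECUTING}$ (incarnation $i$) until abort via the dependency mechanism, or just before the final decrement of $\mathit{num\_active\_tasks}$ after it, or just before a validation task is returned from it. Validation of $(j,i)$: from handing the validation task to a thread until just before its final decrement of $\mathit{num\_active\_tasks}$ or just before it returns an execution task. Global commit index at time $T$: minimum of $\mathit{validation\_idx}$, all $j$ with status not $\mathtt{EXECUTED}$, indices with ongoing pre-validation, and indices of versions with ongoing execution or validation. $tx_0,\dots,tx_k$ are globally committed at $T$ if this index exceeds $k$. *)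

(* Defs.v *)
(* Operational model of the Block-STM algorithm:
   a global state (shared memory + per-thread program counters) and a
   deterministic per-thread atomic step function; a run is any interleaving
   of thread steps from the initial state. *)
From HB Require Import structures.
From mathcomp Require Import all_boot all_order all_algebra.
Set Implicit Arguments. Unset Strict Implicit. Unset Printing Implicit Defensive.

(* Transactions: deterministic programs reading/writing memory locations.  *)
Inductive prog (L V : Type) : Type :=
| PDone
| PRead of L & (V -> prog L V)
| PWrite of L & V & prog L V.
Arguments PDone {L V}.

Inductive tstatus := READY_TO_EXECUTE | EXECUTING | EXECUTED | ABORTING.

Definition is_executed (st : nat * tstatus) : bool :=
  if st.2 is EXECUTED then true else false.
Definition is_ready (st : nat * tstatus) : bool :=
  if st.2 is READY_TO_EXECUTE then true else false.

(* MVMemory entries: (incarnation, value) or ESTIMATE *)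
Inductive mventry (V : Type) := Estimate | Written of nat & V.
Arguments Estimate {V}.

Inductive read_res (V : Type) := NotFound | ReadOK of nat & nat & V | ReadError of nat.
Arguments NotFound {V}. Arguments ReadError {V}.

(* read-set entries: location and version read (None = ⊥, initial storage) *)
Definition rset (L : Type) := seq (L * option (nat * nat)).

Inductive task := ExecTask of nat & nat | ValTask of nat & nat.

(* MVMemory.read(p, j): largest k < j with an entry (p,k). *)
Fixpoint mv_scan (V : Type) (d : nat -> option (mventry V)) (k : nat) : read_res V :=
  match k with
  | 0 => NotFound
  | k'.+1 => match d k' with
             | None => mv_scan d k'
             | Some Estimate => ReadError k'
             | Some (Written i v) => ReadOK k' i v
             end
  end.
Definition mv_read (L V : Type) (data : L -> nat -> option (mventry V)) (p : L) (j : nat) :=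
  mv_scan (data p) j.

(* Thread program counters.  Each constructor is a point of the code just   *)
(* before an atomic operation (or a purely local step).                    *)
Inductive tstate (L : eqType) (V : Type) :=
| TLoop of option task             (* main loop: check done_marker, task in hand *)
| TExit of option task             (* thread has exited (joined) *)
(* next_task *)
| TN1                              (* load validation_idx *)
| TN2 of nat                       (* load execution_idx, compare *)
| TNV1                             (* next_version_to_validate: load validation_idx *)
| TNV2                             (* increment num_active_tasks *)
| TNV3                             (* fetch&increment validation_idx *)
| TNV4 of nat                      (* read status of fetched index *)
| TNV5 of nat                      (* decrement num_active_tasks *)
| TNE1                             (* next_version_to_execute: load execution_idx *)
| TNE2                             (* increment num_active_tasks *)
| TNE3                             (* fetch&increment execution_idx *)
| TTI of nat                       (* try_incarnate from next_task *)
| TDec                             (* decrement num_active_tasks, no task *)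
(* check_done *)
| TCD1 | TCD2 of nat | TCD3 of nat & nat | TCD4 of nat | TCD5 of nat | TCD6
(* execution task (k,i): VM.execute, local state: program, read set, write buffer *)
| TVM of nat & nat & prog L V & rset L & seq (L * V)
(* add_dependency (k, i, blocking b) *)
| TAD1 of nat & nat & nat          (* acquire lock of txn_dependency[b], read status b *)
| TAD2 of nat & nat & nat          (* set status k ABORTING *)
| TAD3 of nat & nat & nat          (* insert k into txn_dependency[b], release *)
(* record: apply write set, then rcu-update written locations, then store read set *)
| TRW of nat & nat & seq (L * V) & rset L & seq (L * V)
| TRR of nat & nat & seq L & seq L & rset L & seq L
| TRRS of nat & nat & bool & rset L
(* finish_execution (k, i, wrote_new_location) *)
| TFE1 of nat & nat & bool         (* set status EXECUTED *)
| TFE2 of nat & nat & bool         (* swap out txn_dependency[k] *)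
| TFE3 of nat & nat & bool & seq nat & seq nat (* resume dependencies *)
| TFEX1 of nat & nat & bool & nat  (* decrease_execution_idx: min *)
| TFEX2 of nat & nat & bool        (* decrease_execution_idx: ++decrease_cnt *)
| TFE4 of nat & nat & bool         (* load validation_idx *)
| TFEV1 of nat & nat               (* decrease_validation_idx(k): min *)
| TFEV2 of nat & nat               (* ++decrease_cnt *)
| TDecE of nat & nat               (* final decrement of the execution *)
(* validation task (k, i) *)
| TVL of nat & nat                 (* load last_read_set[k] *)
| TVR of nat & nat & rset L        (* re-read recorded locations *)
| TVA of nat & nat                 (* try_validation_abort *)
| TCE1 of nat & nat                (* convert_writes_to_estimates: load locations *)
| TCE2 of nat & nat & seq L        (* mark each as ESTIMATE, then set_ready_status *)
| TFVV1 of nat & nat               (* decrease_validation_idx(k+1): min *)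
| TFVV2 of nat & nat               (* ++decrease_cnt *)
| TFV3 of nat & nat                (* load execution_idx *)
| TTIv of nat & nat                (* try_incarnate(k) from finish_validation *)
| TDecV of nat & nat.              (* final decrement of the validation *)
Arguments TN1 {L V}. Arguments TNV1 {L V}. Arguments TNV2 {L V}. Arguments TNV3 {L V}.
Arguments TNE1 {L V}. Arguments TNE2 {L V}. Arguments TNE3 {L V}. Arguments TDec {L V}.
Arguments TCD1 {L V}. Arguments TCD6 {L V}.
Arguments TLoop {L V}.
Arguments TExit {L V}.
Arguments TN2 {L V}.
Arguments TNV4 {L V}.
Arguments TNV5 {L V}.
Arguments TTI {L V}.
Arguments TCD2 {L V}.
Arguments TCD3 {L V}.
Arguments TCD4 {L V}.
Arguments TCD5 {L V}.
Arguments TAD1 {L V}.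
Arguments TAD2 {L V}.
Arguments TAD3 {L V}.
Arguments TFE1 {L V}.
Arguments TFE2 {L V}.
Arguments TFE3 {L V}.
Arguments TFEX1 {L V}.
Arguments TFEX2 {L V}.
Arguments TFE4 {L V}.
Arguments TFEV1 {L V}.
Arguments TFEV2 {L V}.
Arguments TDecE {L V}.
Arguments TVL {L V}.
Arguments TVA {L V}.
Arguments TCE1 {L V}.
Arguments TFVV1 {L V}.
Arguments TFVV2 {L V}.
Arguments TFV3 {L V}.
Arguments TTIv {L V}.
Arguments TDecV {L V}.
Arguments TRR {L V}. Arguments TRRS {L V}. Arguments TVR {L V}. Arguments TCE2 {L V}.

Record gstate (L : eqType) (V : Type) := GState {
  data : L -> nat -> option (mventry V);
  last_written : nat -> seq L;
  last_read : nat -> rset L;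
  exec_idx : nat;
  val_idx : nat;
  dec_cnt : nat;
  active : int;                     (* num_active_tasks *)
  done_marker : bool;
  status : nat -> nat * tstatus;
  deps : nat -> seq nat;            (* txn_dependency *)
  dlock : nat -> bool;              (* lock of txn_dependency[j] held *)
  thr : nat -> tstate L V }.

Section Setters.
Variables (L : eqType) (V : Type).
Implicit Types (s : gstate L V).
Definition updn (T : Type) (f : nat -> T) (k : nat) (y : T) := fun z => if z == k then y else f z.
Definition set_data s d := GState d (last_written s) (last_read s) (exec_idx s) (val_idx s) (dec_cnt s) (active s) (done_marker s) (status s) (deps s) (dlock s) (thr s).
Definition upd_data s (p : L) (k : nat) (e : option (mventry V)) :=
  set_data s (fun q j => if (q == p) && (j == k) then e else data s q j).
Definition set_lw s k l := GState (data s) (updn (last_written s) k l) (last_read s) (exec_idx s) (val_idx s) (dec_cnt s) (active s) (done_marker s) (status s) (deps s) (dlock s) (thr s).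
Definition set_lr s k r := GState (data s) (last_written s) (updn (last_read s) k r) (exec_idx s) (val_idx s) (dec_cnt s) (active s) (done_marker s) (status s) (deps s) (dlock s) (thr s).
Definition set_exec s x := GState (data s) (last_written s) (last_read s) x (val_idx s) (dec_cnt s) (active s) (done_marker s) (status s) (deps s) (dlock s) (thr s).
Definition set_val s x := GState (data s) (last_written s) (last_read s) (exec_idx s) x (dec_cnt s) (active s) (done_marker s) (status s) (deps s) (dlock s) (thr s).
Definition set_dec s x := GState (data s) (last_written s) (last_read s) (exec_idx s) (val_idx s) x (active s) (done_marker s) (status s) (deps s) (dlock s) (thr s).
Definition set_active s x := GState (data s) (last_written s) (last_read s) (exec_idx s) (val_idx s) (dec_cnt s) x (done_marker s) (status s) (deps s) (dlock s) (thr s).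
Definition set_done s x := GState (data s) (last_written s) (last_read s) (exec_idx s) (val_idx s) (dec_cnt s) (active s) x (status s) (deps s) (dlock s) (thr s).
Definition set_status s k x := GState (data s) (last_written s) (last_read s) (exec_idx s) (val_idx s) (dec_cnt s) (active s) (done_marker s) (updn (status s) k x) (deps s) (dlock s) (thr s).
Definition set_deps s k x := GState (data s) (last_written s) (last_read s) (exec_idx s) (val_idx s) (dec_cnt s) (active s) (done_marker s) (status s) (updn (deps s) k x) (dlock s) (thr s).
Definition set_dlock s k x := GState (data s) (last_written s) (last_read s) (exec_idx s) (val_idx s) (dec_cnt s) (active s) (done_marker s) (status s) (deps s) (updn (dlock s) k x) (thr s).
Definition set_thr s t p := GState (data s) (last_written s) (last_read s) (exec_idx s) (val_idx s) (dec_cnt s) (active s) (done_marker s) (status s) (deps s) (dlock s) (updn (thr s) t p).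
Definition incr_active s := set_active s (active s + 1)%R.
Definition decr_active s := set_active s (active s - 1)%R.
End Setters.

Definition wlookup (L : eqType) (V : Type) (ws : seq (L * V)) (q : L) : option V :=
  if [seq x <- ws | x.1 == q] is x :: _ then Some x.2 else None.
Definition wupdate (L : eqType) (V : Type) (ws : seq (L * V)) (q : L) (v : V) :=
  (q, v) :: [seq x <- ws | x.1 != q].

Definition seq_min (ds : seq nat) : nat := foldr minn (head 0 ds) ds.

Definition read_agrees (V : Type) (r : read_res V) (ver : option (nat * nat)) : bool :=
  match r, ver with
  | NotFound, None => true
  | ReadOK j i _, Some (j', i') => (j == j') && (i == i')
  | _, _ => false
  end.

(* One atomic step of thread t (None: thread blocked on a lock, or exited). *)
Definition tstep (L : eqType) (V : Type) (init : L -> V) (n : nat)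
    (tx : nat -> prog L V) (s : gstate L V) (t : nat) : option (gstate L V) :=
  let go (p : tstate L V) (s' : gstate L V) := Some (set_thr s' t p) in
  match thr s t with
  | TLoop tk =>
      if done_marker s then go (TExit tk) s else
      match tk with
      | None => go TN1 s
      | Some (ExecTask k i) => go (TVM k i (tx k) [::] [::]) s
      | Some (ValTask k i) => go (TVL k i) s
      end
  | TExit _ => None
  | TN1 => go (TN2 (val_idx s)) s
  | TN2 v => if v < exec_idx s then go TNV1 s else go TNE1 s
  | TNV1 => if n <= val_idx s then go TCD1 s else go TNV2 s
  | TNV2 => go TNV3 (incr_active s)
  | TNV3 => let k := val_idx s in
            go (if k < n then TNV4 k else TNV5 k) (set_val s k.+1)
  | TNV4 k => if is_executed (status s k) then go (TLoop (Some (ValTask k (status s k).1))) s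
              else go (TNV5 k) s
  | TNV5 _ => go (TLoop None) (decr_active s)
  | TNE1 => if n <= exec_idx s then go TCD1 s else go TNE2 s
  | TNE2 => go TNE3 (incr_active s)
  | TNE3 => let k := exec_idx s in go (TTI k) (set_exec s k.+1)
  | TTI k => if (k < n) && is_ready (status s k) then
               let i := (status s k).1 in
               go (TLoop (Some (ExecTask k i))) (set_status s k (i, EXECUTING))
             else go TDec s
  | TDec => go (TLoop None) (decr_active s)
  | TCD1 => go (TCD2 (dec_cnt s)) s
  | TCD2 c => go (TCD3 c (exec_idx s)) s
  | TCD3 c e => if n <= minn e (val_idx s) then go (TCD4 c) s else go (TLoop None) s
  | TCD4 c => if active s == 0%R then go (TCD5 c) s else go (TLoop None) s
  | TCD5 c => if dec_cnt s == c then go TCD6 s else go (TLoop None) s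
  | TCD6 => go (TLoop None) (set_done s true)
  | TVM k i p rs ws =>
      match p with
      | PDone => go (TRW k i ws rs ws) s
      | PWrite q v p' => go (TVM k i p' rs (wupdate ws q v)) s
      | PRead q f =>
          match wlookup ws q with
          | Some v => go (TVM k i (f v) rs ws) s
          | None =>
              match mv_read (data s) q k with
              | NotFound => go (TVM k i (f (init q)) (rcons rs (q, None)) ws) s
              | ReadOK j i' v => go (TVM k i (f v) (rcons rs (q, Some (j, i'))) ws) s
              | ReadError b => go (TAD1 k i b) s
              end
          end
      end
  | TAD1 k i b =>
      if dlock s b then None else
      if is_executed (status s b) then go (TVM k i (tx k) [::] [::]) s
      else go (TAD2 k i b) (set_dlock s b true)
  | TAD2 k i b => go (TAD3 k i b) (set_status s k ((status s k).1, ABORTING))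
  | TAD3 k i b =>
      go TDec (set_dlock (set_deps s b (if k \in deps s b then deps s b else k :: deps s b)) b false)
  | TRW k i ws rs ((q, v) :: todo) => go (TRW k i ws rs todo) (upd_data s q k (Some (Written i v)))
  | TRW k i ws rs [::] =>
      let new := map fst ws in let prev := last_written s k in
      go (TRR k i new prev rs [seq q <- prev | q \notin new]) s
  | TRR k i new prev rs (q :: todo) => go (TRR k i new prev rs todo) (upd_data s q k None)
  | TRR k i new prev rs [::] =>
      go (TRRS k i (has (fun q => q \notin prev) new) rs) (set_lw s k new)
  | TRRS k i w rs => go (TFE1 k i w) (set_lr s k rs)
  | TFE1 k i w => go (TFE2 k i w) (set_status s k (i, EXECUTED))
  | TFE2 k i w =>
      if dlock s k then None else go (TFE3 k i w (deps s k) (deps s k)) (set_deps s k [::])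
  | TFE3 k i w ds (d :: rem) =>
      go (TFE3 k i w ds rem) (set_status s d ((status s d).1.+1, READY_TO_EXECUTE))
  | TFE3 k i w ds [::] =>
      if ds is [::] then go (TFE4 k i w) s else go (TFEX1 k i w (seq_min ds)) s
  | TFEX1 k i w t' => go (TFEX2 k i w) (set_exec s (minn (exec_idx s) t'))
  | TFEX2 k i w => go (TFE4 k i w) (set_dec s (dec_cnt s).+1)
  | TFE4 k i w =>
      if k < val_idx s then
        (if w then go (TFEV1 k i) s else go (TLoop (Some (ValTask k i))) s)
      else go (TDecE k i) s
  | TFEV1 k i => go (TFEV2 k i) (set_val s (minn (val_idx s) k))
  | TFEV2 k i => go (TDecE k i) (set_dec s (dec_cnt s).+1)
  | TDecE _ _ => go (TLoop None) (decr_active s)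
  | TVL k i => go (TVR k i (last_read s k)) s
  | TVR k i ((q, ver) :: rem) =>
      if read_agrees (mv_read (data s) q k) ver then go (TVR k i rem) s else go (TVA k i) s
  | TVR k i [::] => go (TDecV k i) s
  | TVA k i =>
      if ((status s k).1 == i) && is_executed (status s k) then
        go (TCE1 k i) (set_status s k (i, ABORTING))
      else go (TDecV k i) s
  | TCE1 k i => go (TCE2 k i (last_written s k)) s
  | TCE2 k i (q :: rem) => go (TCE2 k i rem) (upd_data s q k (Some Estimate))
  | TCE2 k i [::] =>
      go (TFVV1 k i) (set_status s k ((status s k).1.+1, READY_TO_EXECUTE))
  | TFVV1 k i => go (TFVV2 k i) (set_val s (minn (val_idx s) k.+1))
  | TFVV2 k i => go (TFV3 k i) (set_dec s (dec_cnt s).+1)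
  | TFV3 k i => if k < exec_idx s then go (TTIv k i) s else go (TDecV k i) s
  | TTIv k i =>
      if (k < n) && is_ready (status s k) then
        let i' := (status s k).1 in
        go (TLoop (Some (ExecTask k i'))) (set_status s k (i', EXECUTING))
      else go (TDecV k i) s
  | TDecV _ _ => go (TLoop None) (decr_active s)
  end.

Definition init_state (L : eqType) (V : Type) : gstate L V :=
  GState (fun _ _ => None) (fun _ => [::]) (fun _ => [::]) 0 0 0 0%R false
         (fun _ => (0, READY_TO_EXECUTE)) (fun _ => [::]) (fun _ => false) (fun _ => TLoop None).

Inductive reachable (L : eqType) (V : Type) (init : L -> V) (n : nat)
    (tx : nat -> prog L V) (m : nat) : gstate L V -> Prop :=
| reach_init : reachable init n tx m (init_state L V)
| reach_step s t s' : reachable init n tx m s -> t < m ->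
    tstep init n tx s t = Some s' -> reachable init n tx m s'.

Definition prevalidating (L : eqType) (V : Type) (p : tstate L V) (j : nat) : Prop :=
  p = TNV4 j \/ p = TNV5 j.

Definition executing (L : eqType) (V : Type) (p : tstate L V) (j i : nat) : Prop :=
  match p with
  | TLoop (Some (ExecTask k i')) | TExit (Some (ExecTask k i')) => k = j /\ i' = i
  | TVM k i' _ _ _ | TAD1 k i' _ | TAD2 k i' _ | TAD3 k i' _
  | TRW k i' _ _ _ | TRR k i' _ _ _ _ | TRRS k i' _ _
  | TFE1 k i' _ | TFE2 k i' _ | TFE3 k i' _ _ _ | TFEX1 k i' _ _ | TFEX2 k i' _
  | TFE4 k i' _ | TFEV1 k i' | TFEV2 k i' | TDecE k i' => k = j /\ i' = i
  | _ => False
  end.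

Definition validating (L : eqType) (V : Type) (p : tstate L V) (j i : nat) : Prop :=
  match p with
  | TLoop (Some (ValTask k i')) | TExit (Some (ValTask k i')) => k = j /\ i' = i
  | TVL k i' | TVR k i' _ | TVA k i' | TCE1 k i' | TCE2 k i' _ | TFVV1 k i'
  | TFVV2 k i' | TFV3 k i' | TTIv k i' | TDecV k i' => k = j /\ i' = i
  | _ => False
  end.

(* x belongs to the set whose minimum is the global commit index *)
Definition in_commit_set (L : eqType) (V : Type) (n m : nat) (s : gstate L V) (x : nat) : Prop :=
  x = val_idx s \/
  (x < n /\ ~~ is_executed (status s x)) \/
  (exists t, t < m /\
     (prevalidating (thr s t) x \/ (exists i, executing (thr s t) x i)
      \/ (exists i, validating (thr s t) x i))).

(* tx_0..tx_k globally committed: global commit index (the minimum) exceeds k *)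
Definition globally_committed (L : eqType) (V : Type) (n m : nat) (s : gstate L V) (k : nat) : Prop :=
  forall x, in_commit_set n m s x -> k < x.

(* Main.v *)
Require Import Defs.
From HB Require Import structures.
From mathcomp Require Import all_boot all_order all_algebra.
From mathcomp Require Import zify.
Set Implicit Arguments. Unset Strict Implicit. Unset Printing Implicit Defensive.

Arguments updn : simpl never.

Section S.
Variables (L : eqType) (V : Type) (init : L -> V) (n : nat) (tx : nat -> prog L V) (m : nat).
Notation state := (gstate L V).
Notation tst := (tstate L V).

Definition isActive (p : tst) : bool :=
  match p with
  | TLoop None | TExit None | TN1 | TN2 _ | TNV1 | TNV2 | TNE1 | TNE2
  | TCD1 | TCD2 _ | TCD3 _ _ | TCD4 _ | TCD5 _ | TCD6 => false
  | _ => true end.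

Definition ownR (p : tst) (j : nat) : bool :=
  match p with
  | TTI k | TFVV1 k _ | TFVV2 k _ | TFV3 k _ | TTIv k _ => k == j
  | TFE3 _ _ _ ds _ => j \in ds
  | TFEX1 _ _ _ t' => t' <= j
  | _ => false end.

Definition ownE (p : tst) (j : nat) : bool :=
  match p with
  | TLoop (Some (ExecTask k _)) | TExit (Some (ExecTask k _))
  | TVM k _ _ _ _ | TAD1 k _ _ | TAD2 k _ _ | TRW k _ _ _ _ | TRR k _ _ _ _ _
  | TRRS k _ _ _ | TFE1 k _ _ => k == j
  | _ => false end.

Definition ownA (p : tst) (j : nat) : bool :=
  match p with
  | TAD3 k _ _ | TCE1 k _ | TCE2 k _ _ => k == j
  | TFE3 _ _ _ _ rem => j \in rem
  | _ => false end.

Definition isFE2 (p : tst) (b : nat) : bool :=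
  if p is TFE2 k _ _ then k == b else false.

Definition tad23 (p : tst) : option nat :=
  match p with TAD2 _ _ b | TAD3 _ _ b => Some b | _ => None end.

Definition tadlt (p : tst) : bool :=
  match p with TAD1 k _ b | TAD2 k _ b | TAD3 k _ b => b < k | _ => true end.

Definition fe3ok (p : tst) : bool :=
  if p is TFE3 _ _ _ ds rem then all (fun x => x \in ds) rem else true.

Definition owned (P : tst -> nat -> bool) (s : state) (j : nat) :=
  exists u, u < m /\ P (thr s u) j.

Definition stat_ok (s : state) (j : nat) : Prop :=
  match (status s j).2 with
  | READY_TO_EXECUTE => exec_idx s <= j \/ owned ownR s j
  | EXECUTING => owned ownE s j
  | EXECUTED => True
  | ABORTING => owned ownA s j \/ exists b, j \in deps s b
  end.

Definition Inv (s : state) : Prop :=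
  [/\ active s = Posz (count (fun u => isActive (thr s u)) (iota 0 m)),
      forall j, j < n -> stat_ok s j,
      forall b j, j \in deps s b -> b < j /\ (~~ is_executed (status s b) \/ owned isFE2 s b),
      forall u, u < m -> tadlt (thr s u) && fe3ok (thr s u) &
      forall u b, u < m -> tad23 (thr s u) = Some b ->
        [/\ dlock s b, (~~ is_executed (status s b) \/ owned isFE2 s b) &
            forall u', u' < m -> tad23 (thr s u') = Some b -> u' = u]].



Lemma count_upd_seq (f : tst -> bool) (g : nat -> tst) t x (r : seq nat) :
  uniq r -> t \in r ->
  (count (fun u => f (updn g t x u)) r + f (g t) = count (fun u => f (g u)) r + f x)%N.
Proof.
elim: r => // a r IH /= /andP[anr ur]; rewrite in_cons.
case: (eqVneq t a) => [ta|ta] /=.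
- subst a => _.
  have -> : count (fun u => f (updn g t x u)) r = count (fun u => f (g u)) r.
    apply: eq_in_count => u ur'; rewrite /updn; case: eqP => // eut.
    by move: anr; rewrite -eut ur'.
  rewrite /updn eqxx; lia.
- move=> tr; rewrite {1}/updn eq_sym (negbTE ta) -addnA IH //; lia.
Qed.

Lemma count_upd (f : tst -> bool) (g : nat -> tst) t x : t < m ->
  (count (fun u => f (updn g t x u)) (iota 0 m) + f (g t) = count (fun u => f (g u)) (iota 0 m) + f x)%N.
Proof. move=> tm; apply: count_upd_seq; [exact: iota_uniq | by rewrite mem_iota]. Qed.

Lemma mv_scan_lt (d : nat -> option (mventry V)) k b : mv_scan d k = ReadError b -> b < k.
Proof.
elim: k => //= k IH; case: (d k) => [[|i v]|] //; first by case=> ->.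
by move/IH => /ltnW; rewrite ltnS.
Qed.

Lemma thr_set (X : state) t p u : thr (set_thr X t p) u = if u == t then p else thr X u.
Proof. by []. Qed.

Lemma owned_tr (P : tst -> nat -> bool) s (X : state) t p j : thr X = thr s -> owned P s j ->
  (P (thr s t) j -> P p j) -> owned P (set_thr X t p) j.
Proof.
move=> hX [u [um hu]] h; exists u; split=> //; rewrite thr_set hX.
by case: eqP => [eu|//]; apply: h; rewrite -eu.
Qed.

Lemma owned_new (P : tst -> nat -> bool) (X : state) t p j : t < m -> P p j -> owned P (set_thr X t p) j.
Proof. by move=> tm h; exists t; rewrite thr_set eqxx. Qed.

Lemma owned_other (P : tst -> nat -> bool) s (X : state) t p j : thr X = thr s -> owned P s j ->
  ~~ P (thr s t) j -> owned P (set_thr X t p) j.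
Proof. by move=> hX ow np; apply: owned_tr ow _ => // /(negP np). Qed.

Ltac dstep := repeat match goal with
 | |- context [match ?x with _ => _ end] => destruct x eqn:?
 | |- Some _ = Some _ -> _ => case=> <-
 | |- None = Some _ -> _ => discriminate
end.

Lemma c1_step s t s' : Inv s -> t < m -> tstep init n tx s t = Some s' ->
  active s' = Posz (count (fun u => isActive (thr s' u)) (iota 0 m)).
Proof.
case=> I1 _ _ _ _ tm.
have C := count_upd isActive (thr s) _ tm.
rewrite /tstep.
destruct (thr s t) eqn:E; dstep.
all: match goal with |- context [set_thr ?X _ ?p] => move: (C p) end.
all: try rewrite E; simpl; rewrite ?I1; try lia.
Qed.


Lemma c4_step s t s' : Inv s -> t < m -> tstep init n tx s t = Some s' ->
  forall u, u < m -> tadlt (thr s' u) && fe3ok (thr s' u).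
Proof.
case=> _ _ _ I4 _ tm.
have I4t := I4 t tm.
rewrite /tstep.
destruct (thr s t) eqn:E; dstep.
all: move=> u um; rewrite thr_set; case: eqP => [_|_]; last exact: (I4 u um).
all: simpl; try done.
all: try (rewrite E in I4t; exact I4t).
all: try (rewrite E /= in I4t; by case/andP: I4t).
all: try (by apply/allP).
all: try (rewrite andbT; apply: mv_scan_lt; eassumption).
all: try (simpl in I4t; by case/andP: I4t => _ /andP[]).
all: simpl in I4t; by case/andP: I4t.
Qed.

Definition I5p (s : state) := forall u b, u < m -> tad23 (thr s u) = Some b ->
        [/\ dlock s b, (~~ is_executed (status s b) \/ owned isFE2 s b) &
            forall u', u' < m -> tad23 (thr s u') = Some b -> u' = u].

Lemma eo_pres s (X : state) t p b : thr X = thr s ->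
  (isFE2 (thr s t) b -> isFE2 p b) ->
  (is_executed (status X b) -> is_executed (status s b) \/ isFE2 p b) ->
  t < m ->
  (~~ is_executed (status s b) \/ owned isFE2 s b) ->
  (~~ is_executed (status (set_thr X t p) b) \/ owned isFE2 (set_thr X t p) b).
Proof.
move=> hX h3 h4 tm [ne|ow].
- case ex: (is_executed (status X b)); last by left.
  case: (h4 ex) => [e|f]; first by rewrite e in ne.
  by right; apply: owned_new.
- by right; apply: owned_tr ow h3.
Qed.

Lemma frame5 s (X : state) t p : I5p s -> t < m -> thr X = thr s ->
  (tad23 p = None \/ tad23 p = tad23 (thr s t)) ->
  (forall b, dlock s b -> (tad23 (thr s t) = Some b /\ tad23 p = None) \/ dlock X b) ->
  (forall b, isFE2 (thr s t) b -> isFE2 p b \/ ~~ dlock s b) ->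
  (forall b, is_executed (status X b) -> is_executed (status s b) \/ isFE2 p b) ->
  I5p (set_thr X t p).
Proof.
move=> I5 tm hX h1 h2 h3 h4 u b um.
have h3' : dlock s b -> isFE2 (thr s t) b -> isFE2 p b.
  by move=> db /h3 [//|]; rewrite db.
rewrite thr_set; case: eqP => [eut|neut].
- move=> pb.
  have tb : tad23 (thr s t) = Some b by case: h1 => h; [rewrite h in pb | rewrite -h].
  case: (I5 t b tm tb) => db eo un.
  split.
  + by case: (h2 b db) => [[_ pn]|//]; rewrite pb in pn.
  + exact: (eo_pres hX (h3' db) (h4 b) tm eo).
  + move=> u' u'm; rewrite thr_set; case: eqP => [->|_]; first by rewrite eut.
    by rewrite hX => /(un u' u'm) ->; rewrite eut.
- rewrite hX => ub.
  case: (I5 u b um ub) => db eo un.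
  split.
  + case: (h2 b db) => [[tb _]|//].
    by case: neut; rewrite (un t tm tb).
  + exact: (eo_pres hX (h3' db) (h4 b) tm eo).
  + move=> u' u'm; rewrite thr_set; case: eqP => [eu't|_].
    * case: h1 => h pb; first by rewrite h in pb.
      rewrite h in pb; by rewrite eu't (un t tm pb).
    * by rewrite hX => /(un u' u'm).
Qed.

Lemma c5_step s t s' : Inv s -> t < m -> tstep init n tx s t = Some s' -> I5p s'.
Proof.
case=> _ _ _ I4 I5 tm.
have I4t := I4 t tm.
rewrite /tstep.
destruct (thr s t) eqn:E; dstep.
all: try (apply: (frame5 I5 tm) => //; [
  try rewrite E; by [left|right] |
  move=> b0 hb; rewrite ?E /=; try (by right); try (right; rewrite /updn; case: eqP => [->|]//);
     try (rewrite /updn; case: eqP => [->|_]; [by left | by right]) |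
  move=> b0; rewrite ?E /=; try done; try (move/eqP => <-; right;
     match goal with H : dlock _ _ = false |- _ => by rewrite H end) |
  move=> b0; rewrite /=; try (by left); rewrite /updn; case: eqP => [->|]; simpl; by [left|right; rewrite ?eqxx] ]).
(* TAD1 -> TAD2 *)
move=> u b um; rewrite thr_set; case: eqP => [->|neu].
- case=> <-; split.
  + by rewrite /= /updn eqxx.
  + by left; rewrite Heqb0.
  + move=> u' u'm; rewrite thr_set; case: eqP => [//|_ /= ub].
    by case: (I5 u' n2 u'm ub); rewrite Heqb.
- move=> ub; case: (I5 u b um ub) => db eo un.
  have nb : b != n2 by apply/eqP => eb; rewrite eb Heqb in db.
  split.
  + by rewrite /= /updn (negbTE nb).
  + apply: (eo_pres (s := s)) => //; first by rewrite E.
    by move=> ->; left.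
  + move=> u' u'm; rewrite thr_set; case: eqP => [_ /= [] eb|_]; last exact: un.
    by rewrite eb eqxx in nb.
Qed.



Definition I3p (s : state) := forall b j, j \in deps s b -> b < j /\ (~~ is_executed (status s b) \/ owned isFE2 s b).

Lemma frame3 s (X : state) t p : I3p s -> t < m -> thr X = thr s ->
  (forall b j, j \in deps X b -> j \in deps s b /\ (isFE2 (thr s t) b -> isFE2 p b)) ->
  (forall b, is_executed (status X b) -> is_executed (status s b) \/ isFE2 p b) ->
  I3p (set_thr X t p).
Proof.
move=> I3 tm hX hd h4 b j /= /hd [jd h3].
case: (I3 b j jd) => bj eo; split => //.
exact: (eo_pres hX h3 (h4 b) tm eo).
Qed.

Lemma c3_step s t s' : Inv s -> t < m -> tstep init n tx s t = Some s' -> I3p s'.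
Proof.
case=> _ _ I3 I4 I5 tm.
have I4t := I4 t tm.
have I5t := I5 t.
rewrite /tstep.
destruct (thr s t) eqn:E; dstep.
all: try (apply: (frame3 I3 tm) => //; [
  move=> b0 j0 /=; first [ solve [move=> h; split => //; rewrite ?E //=] |
     (rewrite /updn; case: eqP => [->//|ne] h; split => //; rewrite E /=; move/eqP => eb; by case: ne) ] |
  move=> b0; rewrite /=; try (by left); rewrite /updn; case: eqP => [->|]; simpl; by [left|right; rewrite ?eqxx] ]).
all: match goal with |- I3p (set_thr (set_dlock (set_deps ?ss ?b ?D) _ false) ?tt TDec) =>
  have EO c : (~~ is_executed (status s c) \/ owned isFE2 s c) ->
   (~~ is_executed (status s c) \/ owned isFE2 (set_thr (set_dlock (set_deps s b D) b false) tt TDec) c) by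
   apply: (eo_pres (X := set_dlock (set_deps s b D) b false)) => //=; try rewrite E //; by left end.
all: have [_ eo2 _] := I5t n2 tm erefl.
all: rewrite /= andbT in I4t.
all: move=> b j /=; rewrite /updn; case: eqP => [->|nb] jd; last by case: (I3 b j jd) => ? /EO.
- by case: (I3 n2 j jd) => ? /EO.
- move: jd; rewrite in_cons; case/orP => [/eqP ->|jd]; first by split => //; apply: EO.
  by case: (I3 n2 j jd) => ? /EO.
Qed.


Lemma foldr_min_le (a : nat) ds j : j \in ds -> foldr minn a ds <= j.
Proof.
elim: ds => //= x r IH; rewrite in_cons; case/orP => [/eqP ->|/IH h]; first exact: geq_minl.
exact: leq_trans (geq_minr _ _) h.
Qed.

Lemma seq_min_le ds j : j \in ds -> seq_min ds <= j.
Proof. exact: foldr_min_le. Qed.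

Lemma owned_tr2 (P : tst -> nat -> bool) (Q : Prop) s (X : state) t p j : thr X = thr s -> owned P s j ->
  (P (thr s t) j -> P p j \/ Q) -> owned P (set_thr X t p) j \/ Q.
Proof.
move=> hX [u [um hu]] h.
case: (eqVneq u t) => [eut|neut].
- by subst u; case: (h hu) => [pp|q]; [left; apply: owned_new | right].
- by left; exists u; rewrite thr_set (negbTE neut) hX.
Qed.

Definition I2p (s : state) := forall j, j < n -> stat_ok s j.

Lemma frame2 s (X : state) t p (K : nat -> bool) : I2p s -> t < m -> thr X = thr s ->
  (forall j, j < n -> ~~ K j -> status X j = status s j) ->
  (forall j, j < n -> K j -> stat_ok (set_thr X t p) j) ->
  (forall j, j < n -> ~~ K j -> is_ready (status s j) -> exec_idx s <= j -> exec_idx X <= j \/ ownR p j) ->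
  (forall j b, j < n -> ~~ K j -> j \in deps s b -> (status s j).2 = ABORTING ->
      (exists b', j \in deps X b') \/ ownA p j) ->
  (forall j, j < n -> ~~ K j -> ownR (thr s t) j -> is_ready (status s j) -> ownR p j \/ exec_idx X <= j) ->
  (forall j, j < n -> ~~ K j -> ownE (thr s t) j -> (status s j).2 = EXECUTING -> ownE p j) ->
  (forall j, j < n -> ~~ K j -> ownA (thr s t) j -> (status s j).2 = ABORTING ->
      ownA p j \/ exists b, j \in deps X b) ->
  I2p (set_thr X t p).
Proof.
move=> I2 tm hX hs hK he hd hR hE hA j jn.
case: (boolP (K j)) => Kj; first exact: hK.
have := I2 j jn; rewrite /stat_ok /= (hs j jn Kj).
case E: (status s j) => [i st]; case: st E => E /=.
- case=> [le|ow].
    have := he j jn Kj; rewrite E => /(_ erefl le) [le'|pr]; first by left.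
    by right; apply: owned_new.
  have := owned_tr2 hX ow (fun h => hR j jn Kj h _).
  rewrite E => /(_ erefl) [ow'|le]; [by right|by left].
- move=> ow; apply: owned_tr ow _ => // h; apply: hE => //; by rewrite E.
- by [].
- case=> [ow|[b jb]].
  + have := owned_tr2 hX ow (fun h => hA j jn Kj h _).
    rewrite E => /(_ erefl) [ow'|q]; [by left|by right].
  + have := hd j b jn Kj jb; rewrite E => /(_ erefl) [[b' jb']|pa].
    * by right; exists b'.
    * by left; apply: owned_new.
Qed.

Lemma c2_step s t s' : Inv s -> t < m -> tstep init n tx s t = Some s' -> I2p s'.
Proof.
case=> _ I2 I3 I4 I5 tm.
have I4t := I4 t tm.
rewrite /tstep.
destruct (thr s t) eqn:E; dstep.
all: try (apply: (frame2 (K := fun _ => false) I2 tm);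
  [ reflexivity | by [] | by [] | (move=> jj jjn _ _ le; simpl; first [by left | by left; exact: leq_trans (geq_minl _ _) le |
 (rewrite ltn_neqAle le andbT; case: eqP => [->|]; [by right; rewrite /= eqxx | by left])]) | (move=> jj bb0 jjn _ jdd _; first
  [ by left; exists bb0
  | by left; exists bb0; rewrite /= /updn; case: eqP => [ee|_] //; rewrite -ee ?in_cons jdd ?orbT
  | by rewrite /= /updn; case: eqP => [ebb|_]; [right; rewrite /= -ebb | left; exists bb0] ]) | (move=> jj jjn _; rewrite ?E; simpl; first
  [ by []
  | by move=> ->; left
  | by move=> hh _; left; apply: seq_min_le
  | by move=> hh _; right; apply: leq_trans (geq_minr _ _) hh
  | by move/eqP => ejj rr; subst jj; match goal with H : _ = false |- _ => by rewrite jjn rr in H end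
  | by move/eqP => ejj _; right; subst jj; match goal with H : (_ < _) = false |- _ => by rewrite leqNgt H end ]) | (move=> jj jjn _; rewrite ?E; simpl; first [ by [] | by move=> -> ]) | (move=> jj jjn _; rewrite ?E; simpl; first
  [ by []
  | by move=> ->; left
  | by move/eqP => <- _; right; match goal with E : _ = TAD3 _ _ ?bb |- _ => exists bb end;
       rewrite /= /updn eqxx ?in_cons ?eqxx ]) ]).
all: try (match goal with |- I2p (set_thr (set_status _ ?k _) _ _) =>
     apply: (frame2 (K := fun j => j == k) I2 tm) end;
  [ reflexivity
  | by move=> jj jjn; rewrite /= /updn => /negbTE ->
  | move=> jj jjn /eqP ->; rewrite /stat_ok /= /updn eqxx /=; first
     [ done | (by apply: owned_new => //=; rewrite ?eqxx) | (by left; apply: owned_new => //=; rewrite ?eqxx)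
     | (by right; apply: owned_new => //=; rewrite ?eqxx) | (by right; apply: owned_new => //=; move: I4t => /= /andP[]) ]
  | by move=> jj jjn _ _ le; left
  | by move=> jj bb jjn _ jd _; left; exists bb
  | move=> jj jjn nk; rewrite ?E /=; first [by [] | by move/eqP => ejk; subst; rewrite eqxx in nk | by move=> hh _; left]
  | move=> jj jjn nk; rewrite ?E /=; first [by [] | by move/eqP => ejk; subst; rewrite eqxx in nk | by move=> hh _]
  | move=> jj jjn nk; rewrite ?E /=; first [by [] | by move/eqP => ejk; subst; rewrite eqxx in nk |
        by rewrite in_cons (negbTE nk) /= => hh _; left] ]).
apply: (frame2 (K := fun _ => false) I2 tm) => //.
- by move=> jj jjn _ _ /=; rewrite leq_eqVlt => /orP[h|h]; [right|left].
- by move=> jj bb jjn _ jd _; left; exists bb.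
- by move=> jj jjn _; rewrite E.
- by move=> jj jjn _; rewrite E.
- by move=> jj jjn _; rewrite E.
apply: (frame2 (K := fun _ => false) I2 tm) => //.
- by move=> *; left.
- move=> jj bb jjn _ jd _; case: (eqVneq bb n0) => [ebb|nb].
  + by right; rewrite /= -ebb.
  + by left; exists bb; rewrite /= /updn (negbTE nb).
all: by move=> jj jjn _; rewrite ?E /=.
Qed.


Lemma inv_step s t s' : Inv s -> t < m -> tstep init n tx s t = Some s' -> Inv s'.
Proof.
move=> I tm st; split.
- exact: c1_step I tm st.
- exact: c2_step I tm st.
- exact: c3_step I tm st.
- exact: c4_step I tm st.
- exact: c5_step I tm st.
Qed.

Lemma inv_init : Inv (init_state L V).
Proof.
split.
- by rewrite /=; elim: (iota 0 m).
- by move=> j jn; rewrite /stat_ok /=; left.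
- by [].
- by [].
- by [].
Qed.

Lemma inv_reach s : reachable init n tx m s -> Inv s.
Proof.
elim=> [|s0 t s' _ I tm st]; first exact: inv_init.
exact: inv_step I tm st.
Qed.

Lemma ownR_act p j : ownR p j -> isActive p.
Proof. by case: p => //= [] [] // [] //. Qed.
Lemma ownE_act p j : ownE p j -> isActive p.
Proof. by case: p => //= [] [] // [] //. Qed.
Lemma ownA_act p j : ownA p j -> isActive p.
Proof. by case: p => //= [] [] // [] //. Qed.
Lemma fe2_act p j : isFE2 p j -> isActive p.
Proof. by case: p => //= [] [] // [] //. Qed.

Lemma prev_act p x : prevalidating p x -> isActive p.
Proof. by case=> ->. Qed.
Lemma exec_act p x i : executing p x i -> isActive p.
Proof. case: p => //=; by case=> [[]|]. Qed.
Lemma val_act p x i : validating p x i -> isActive p.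
Proof. case: p => //=; by case=> [[]|]. Qed.

End S.


Unset Implicit Arguments.
Set Strict Implicit.

Theorem mainTheorem2 (L : eqType) (V : Type) (init : L -> V) (n : nat)
    (tx : nat -> prog L V) (m : nat) (s : gstate L V) :
  reachable init n tx m s ->
  n <= exec_idx s -> n <= val_idx s -> active s = 0%R ->
  forall k, k < n -> globally_committed n m s k.
Proof.
move=> R en vn a0 k kn.
have [I1 I2 I3 _ _] := inv_reach R.
have c0 : count (fun u => isActive (thr s u)) (iota 0 m) = 0%N.
  move: I1; rewrite a0 => h; lia.
have noact : forall u, u < m -> ~~ isActive (thr s u).
  have : ~~ has (fun u => isActive (thr s u)) (iota 0 m) by rewrite has_count c0.
  move/hasPn => h u um; apply: h; by rewrite mem_iota.
have allex : forall j, j < n -> is_executed (status s j).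
  elim/ltn_ind => j IH jn; case E: (is_executed (status s j)) => //; exfalso.
  have := I2 j jn; rewrite /stat_ok; case: (status s j) E => i [] //= _.
  - case=> [le|[u [um o]]]; first lia.
    by move: (noact u um); rewrite (ownR_act o).
  - case=> u [um o]; by move: (noact u um); rewrite (ownE_act o).
  - case=> [[u [um o]]|[b jb]]; first by move: (noact u um); rewrite (ownA_act o).
    have [bj [ne|[u [um o]]]] := I3 b j jb.
    + by rewrite IH // ?(ltn_trans bj jn) in ne.
    + by move: (noact u um); rewrite (fe2_act o).
move=> x [->|[[xn nx]|[u [um hu]]]].
- exact: leq_trans kn vn.
- by rewrite allex in nx.
- exfalso; move: (noact u um).
  case: hu => [h|[[i h]|[i h]]].
  + by rewrite (prev_act h).
  + by rewrite (exec_act h).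
  + by rewrite (val_act h).
Qed.
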